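(* Let $p\ge1$, $k\ge1$, $r\in\{0,\dots,p\}$ and let $(c,\{f_i\}_{i=0}^k)$ be a piecewise affine VAR (see context) for which there exists $\alpha\in\mathbb R^{p\times r}$ of rank $r$ such that (1) $c=\alpha\mu$, $\bar\pi^{(\ell)}=\alpha\bar\mu^{(\ell)}$ and $\Pi^{(\ell)}=\alpha\beta^{(\ell)\top}$ for some $\mu,\bar\mu^{(\ell)}\in\mathbb R^r$ and $\beta^{(\ell)}\in\mathbb R^{p\times r}$, for all $\ell\in\{1,\dots,L\}$; and (2) $f_0:\mathbb R^p\to\mathbb R^p$ is a homeomorphism, with each $\Phi_0^{(\ell)}$ invertible. Let $\theta(z)=\sum_{\ell=1}^L\mathbf 1\{z\in\mathscr Z^{(\ell)}\}(\bar\mu^{(\ell)}+\beta^{(\ell)\top}z)$ (so that $\pi=\alpha\theta$). Then for all $\mathbf z=(z^\top,\boldsymbol\zeta^\top)^\top,\mathbf z'=(z'^\top,\boldsymbol\zeta'^\top)^\top\in\mathbb R^p\times\mathbb R^{p(k-1)}$ there exists $\boldsymbol\beta\in\mathcal B\defeq\operatorname{co}\{\boldsymbol\beta^{(\ell)}\}_{\ell=1}^L$ with $$[\boldsymbol\theta(f_0^{-1}(z))+\mathbf D_0\mathbf z]-[\boldsymbol\theta(f_0^{-1}(z'))+\mathbf D_0\mathbf z']=\boldsymbol\beta^\top(\mathbf z-\mathbf z'),$$ and $$\rho_{JSR}(\{I_{p(k-1)+r}+\boldsymbol\beta^\top\boldsymbol\alpha:\boldsymbol\beta\in\mathcal B\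})=\rho_{JSR}(\{I_{p(k-1)+r}+\boldsymbol\beta^{(\ell)\top}\boldsymbol\alpha\}_{\ell=1}^L).$$
   Context: Piecewise affine VAR: $\{\mathscr Z^{(\ell)}\}_{\ell=1}^L$ partitions $\mathbb R^p$ into convex sets and, for $i=0,\dots,k$, $f_i(z)=\sum_{\ell=1}^L\mathbf 1\{z\in\mathscr Z^{(\ell)}\}(\bar\phi_i^{(\ell)}+\Phi_i^{(\ell)}z)$ with each $f_i$ continuous, $f_i(0)=0$; model $f_0(z_t)=c+\sum_{i=1}^kf_i(z_{t-i})+u_t$. $\bar\pi^{(\ell)}=-(\bar\phi_0^{(\ell)}-\sum_{i=1}^k\bar\phi_i^{(\ell)})$, $\Pi^{(\ell)}=-(\Phi_0^{(\ell)}-\sum_{i=1}^k\Phi_i^{(\ell)})$, $\Gamma_j^{(\ell)}=-\sum_{i=j+1}^k\Phi_i^{(\ell)}$, $\boldsymbol\Gamma^{(\ell)}=(\Gamma_1^{(\ell)\top},\dots,\Gamma_{k-1}^{(\ell)\top})^\top$, $\boldsymbol\beta^{(\ell)\top}=\begin{bmatrix}\beta^{(\ell)\top}(\Phi_0^{(\ell)})^{-1}&0\\\boldsymbol\Gamma^{(\ell)}(\Phi_0^{(\ell)})^{-1}&D\end{bmatrix}$. $g_j(z)=-\sum_{i=j+1}^kf_i(z)$, $\mathbf g=(g_1^\top,\dots,g_{k-1}^\top)^\top$, $\boldsymbol\theta=(\theta^\top,\mathbf g^\top)^\top$. $D\in\mathbb R^{p(k-1)\times p(k-1)}$ has $-I_p$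 diagonal blocks, $I_p$ blocks immediately above the diagonal, zeros elsewhere (empty when $k=1$); $E=(I_p,0_{p\times p(k-2)})^\top$; $\mathbf D_0=\begin{bmatrix}0_{r\times p}&0\\0&D\end{bmatrix}$; $\boldsymbol\alpha=\begin{bmatrix}\alpha & E^\top\\ 0 & I_{p(k-1)}\end{bmatrix}$. $\operatorname{co}$ denotes convex hull. $\rho_{JSR}(\mathcal A)=\limsup_{t}\sup\{\rho(M_1\cdots M_t)^{1/t}:M_s\in\mathcal A\}$. *)

(* Defs.v *)
From HB Require Import structures.
From mathcomp Require Import all_boot all_order all_algebra.
From mathcomp Require Import all_classical all_reals all_analysis.
From mathcomp Require Import complex.

Set Implicit Arguments.
Unset Strict Implicit.
Unset Printing Implicit Defensive.

Import Order.TTheory GRing.Theory Num.Theory.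
Import numFieldNormedType.Exports.

Local Open Scope classical_set_scope.
Local Open Scope ring_scope.

(* Block indexing of R^{(k-1)p} = stacked vectors (v_1; ...; v_{k-1}),  *)
(* each v_a in R^p.  A row index i : 'I_(m * p) lies in block i %/ p  *)
(* (0-based) at position i %% p inside the block.                      *)

Lemma blk_pos_proof (m p : nat) (i : 'I_(m * p)) : (i %% p < p)%N.
Proof.
case: p i => [|p] i; last by rewrite ltn_mod.
by case: i => i /=; rewrite muln0.
Qed.

Definition blk_pos (m p : nat) (i : 'I_(m * p)) : 'I_p :=
  Ordinal (blk_pos_proof i).

Section Defs.
Variable R : realType.

Definition stackv (m p : nat) (v : nat -> 'cV[R]_p) : 'cV[R]_(m * p) :=
  \col_(i < m * p) v (i %/ p)%N (blk_pos i) 0.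

Definition stackM (m p q : nat) (M : nat -> 'M[R]_(p, q)) : 'M[R]_(m * p, q) :=
  \matrix_(i < m * p, j < q) M (i %/ p)%N (blk_pos i) j.

(* D in R^{p(k-1) x p(k-1)}: -I_p diagonal blocks, I_p blocks immediately
   above the diagonal, 0 elsewhere (here m = k-1). *)
Definition Dmx (m p : nat) : 'M[R]_(m * p) :=
  \matrix_(i < m * p, j < m * p)
    if (i %% p == j %% p)%N then
      ((j %/ p == (i %/ p).+1)%N%:R - (i %/ p == j %/ p)%N%:R)
    else 0.

Definition ETmx (m p : nat) : 'M[R]_(p, m * p) :=
  \matrix_(b < p, i < m * p) ((i : nat) == (b : nat))%:R.

Definition pwaff (p q L : nat) (Z : 'I_L -> set 'cV[R]_p)
    (a : 'I_L -> 'cV[R]_q) (A : 'I_L -> 'M[R]_(q, p)) (z : 'cV[R]_p)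
    : 'cV[R]_q :=
  \sum_(l < L) (\1_(Z l) z : R) *: (a l + A l *m z).

Definition convex_partition (p L : nat) (Z : 'I_L -> set 'cV[R]_p) : Prop :=
  (forall l x y (t : R), Z l x -> Z l y -> 0 <= t <= 1 ->
      Z l (t *: x + (1 - t) *: y)) /\
  (forall l l', l != l' -> Z l `&` Z l' = set0) /\
  (\bigcup_(l in [set: 'I_L]) Z l = [set: 'cV[R]_p]).

Definition conv_hull (L m n : nat) (F : 'I_L -> 'M[R]_(m, n)) : set 'M[R]_(m, n) :=
  [set B | exists w : 'I_L -> R,
      (forall l, 0 <= w l) /\ \sum_(l < L) w l = 1 /\
      B = \sum_(l < L) w l *: F l].

(* spectral radius: largest modulus of a complex eigenvalue
   (sup of the empty set is 0, i.e. rho of a 0x0 matrix is 0) *)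
Definition spec_rad (n : nat) (M : 'M[R]_n) : R :=
  sup [set ComplexField.Normc.normc lam | lam in
         [set lam : R[i] | eigenvalue (map_mx (fun x => (x%:C)%C) M) lam]].

Definition jsr (n : nat) (A : set 'M[R]_n) : \bar R :=
  limn_esup (fun t : nat =>
    ereal_sup [set ((spec_rad (\big[@mulmx R n n n/1%:M]_(s < t) Ms s))
                      `^ (t%:R^-1))%:E
              | Ms in [set Ms : 'I_t -> 'M[R]_n | forall s, A (Ms s)]]).

(* The piecewise affine VAR  f_0(z_t) = c + sum_{i=1}^k f_i(z_{t-i}) + u_t *)
Section VAR.
Variables (p k L : nat).
Variable Z : 'I_L -> set 'cV[R]_p.
Variable phibar : 'I_k.+1 -> 'I_L -> 'cV[R]_p.
Variable Phi : 'I_k.+1 -> 'I_L -> 'M[R]_p.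

Definition fVAR (i : 'I_k.+1) : 'cV[R]_p -> 'cV[R]_p :=
  pwaff Z (phibar i) (Phi i).

Definition pibarVAR (l : 'I_L) : 'cV[R]_p :=
  - (phibar ord0 l - \sum_(i < k.+1 | (0 < i)%N) phibar i l).

Definition PiVAR (l : 'I_L) : 'M[R]_p :=
  - (Phi ord0 l - \sum_(i < k.+1 | (0 < i)%N) Phi i l).

Definition GammaVAR (j : nat) (l : 'I_L) : 'M[R]_p :=
  - \sum_(i < k.+1 | (j < i)%N) Phi i l.

Definition bGammaVAR (l : 'I_L) : 'M[R]_(k.-1 * p, p) :=
  stackM k.-1 (fun a => GammaVAR a.+1 l).

Definition gVAR (j : nat) (z : 'cV[R]_p) : 'cV[R]_p :=
  - \sum_(i < k.+1 | (j < i)%N) fVAR i z.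

Definition bgVAR (z : 'cV[R]_p) : 'cV[R]_(k.-1 * p) :=
  stackv k.-1 (fun a => gVAR a.+1 z).

Variable r : nat.
Variable mubar : 'I_L -> 'cV[R]_r.
Variable beta : 'I_L -> 'M[R]_(p, r).

Definition thetaVAR (z : 'cV[R]_p) : 'cV[R]_r :=
  pwaff Z mubar (fun l => (beta l)^T) z.

Definition bthetaVAR (z : 'cV[R]_p) : 'cV[R]_(r + k.-1 * p) :=
  col_mx (thetaVAR z) (bgVAR z).

Definition bbetaT (l : 'I_L) : 'M[R]_(r + k.-1 * p, p + k.-1 * p) :=
  block_mx ((beta l)^T *m invmx (Phi ord0 l)) 0
           (bGammaVAR l *m invmx (Phi ord0 l)) (Dmx k.-1 p).

Definition bD0 : 'M[R]_(r + k.-1 * p, p + k.-1 * p) :=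
  block_mx 0 0 0 (Dmx k.-1 p).

Variable alpha : 'M[R]_(p, r).

Definition balpha : 'M[R]_(p + k.-1 * p, r + k.-1 * p) :=
  block_mx alpha (ETmx k.-1 p) 0 1%:M.

End VAR.

End Defs.

(* Main.v *)
Require Import Defs.
From HB Require Import structures.
From mathcomp Require Import all_boot all_order all_algebra.
From mathcomp Require Import all_classical all_reals all_analysis.
From mathcomp Require Import complex.
Import Order.TTheory GRing.Theory Num.Theory.
Import numFieldNormedType.Exports.
Local Open Scope classical_set_scope.
Local Open Scope ring_scope.
Set Implicit Arguments.
Unset Strict Implicit.
Unset Printing Implicit Defensive.
From mathcomp Require Import lra.

Section PowerSum.
Variable C : numFieldType.

Lemma powsum_filter n (x : 'I_n -> C) (i0 : 'I_n) :
  exists2 c : C, c != 0 & exists Q : {poly C}, forall m,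
    \sum_(a < size Q) Q`_a * (\sum_i x i ^+ (m + a)) = c * x i0 ^+ m.
Proof.
set mu := x i0.
pose Q := \prod_(j | x j != mu) ('X - (x j)%:P).
have HQ y : Q.[y] = \prod_(j | x j != mu) (y - x j).
  by rewrite /Q horner_prod; apply: eq_bigr => j _; rewrite hornerXsubC.
exists ((#|[pred j | x j == mu]|)%:R * Q.[mu]).
  rewrite mulf_neq0 //.
    rewrite pnatr_eq0 -lt0n; apply/card_gt0P; exists i0; by rewrite inE.
  rewrite HQ; apply/prodf_neq0 => j; by rewrite subr_eq0 eq_sym.
exists Q => m.
under eq_bigr => a _ do rewrite mulr_sumr.
rewrite exchange_big /=.
have -> : \sum_i \sum_(a < size Q) Q`_a * x i ^+ (m + a) =
          \sum_i x i ^+ m * Q.[x i].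
  apply: eq_bigr => i _; rewrite horner_coef mulr_sumr; apply: eq_bigr => a _.
  by rewrite exprD mulrCA.
rewrite (bigID [pred j | x j == mu]) /=.
rewrite [X in _ + X]big1 ?addr0; last first.
  move=> i Hi; rewrite HQ (bigD1 i) //= subrr mul0r mulr0 //.
rewrite (eq_bigr (fun _ => mu ^+ m * Q.[mu])); last by move=> i /eqP ->.
by rewrite sumr_const -[LHS]mulr_natl [mu ^+ m * _]mulrC mulrA.
Qed.

End PowerSum.

Section Growth.
Variable R : realType.

Lemma bernoulli_ge (h : R) m : 0 <= h -> 1 + m%:R * h <= (1 + h) ^+ m.
Proof.
move=> h0; elim: m => [|m IH]; first by rewrite mul0r addr0 expr0.
rewrite exprS; apply: le_trans (_ : (1 + h) * (1 + m%:R * h) <= _); last first.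
  by rewrite ler_wpM2l // addr_ge0.
rewrite mulrDl mul1r mulrDr mulr1 -natr1 mulrDl mul1r.
by rewrite addrA lerD2l lerDl mulr_ge0 // mulr_ge0.
Qed.

Lemma growth_le (nu q c B : R) N : 0 < c -> 0 <= q -> 0 <= nu ->
  (forall m, (N <= m)%N -> c * nu ^+ m <= B * q ^+ m) -> nu <= q.
Proof.
move=> c0 q0 nu0 H; rewrite leNgt; apply/negP => qnu.
have nu0' : 0 < nu by apply: le_lt_trans qnu.
have [q00|qpos] := eqVneq q 0.
  have := H N (leqnn N); rewrite q00 expr0n.
  case: N H => [|N] H /=.
    rewrite !expr0 mulr1 mulr1 => cB.
    have := H 1%N isT; rewrite q00 expr0n /= mulr0 expr1 => h.
    by move: (mulr_gt0 c0 nu0'); rewrite ltNge h.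
  rewrite mulr0 => h; by move: (mulr_gt0 c0 (exprn_gt0 N.+1 nu0')); rewrite ltNge h.
have qp : 0 < q by rewrite lt_def qpos q0.
set h := nu / q - 1.
have hpos : 0 < h by rewrite subr_gt0 ltr_pdivlMr // mul1r.
have key m : (N <= m)%N -> c * (1 + m%:R * h) <= B.
  move=> Nm; apply: le_trans (_ : c * (1 + h) ^+ m <= _).
    by rewrite (ler_wpM2l (ltW c0)) //; apply: bernoulli_ge; exact: ltW.
  have := H m Nm; rewrite /h [1 + _]addrC subrK expr_div_n mulrA.
  by rewrite ler_pdivrMr ?exprn_gt0.
set M := (N + Num.Def.archi_bound (`|B| / (c * h)))%N.
have := key M (leq_addr _ _).
have Hb := @archi_boundP _ (`|B| / (c * h)) (divr_ge0 (normr_ge0 _) (ltW (mulr_gt0 c0 hpos))).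
rewrite leNgt => /negP; apply.
apply: le_lt_trans (ler_norm B) _.
rewrite mulrDr mulr1 ltr_pwDl // (mulrC c) -mulrA (mulrC h).
rewrite -ler_pdivrMr ?mulr_gt0 //; apply: (le_trans (ltW Hb)).
by rewrite ler_nat leq_addl.
Qed.

End Growth.

Section CPow.
Variable R : realType.
Local Notation nc := (@ComplexField.Normc.normc R).

Lemma nc_ge0 (x : R[i]) : 0 <= nc x.
Proof. by case: x => a b; exact: sqrtr_ge0. Qed.

Lemma nc_sum (I : Type) (r : seq I) (P : pred I) (F : I -> R[i]) :
  nc (\sum_(i <- r | P i) F i) <= \sum_(i <- r | P i) nc (F i).
Proof.
elim/big_rec2: _ => [|i y1 y2 _ H]; first by rewrite ComplexField.Normc.normc0.
apply: le_trans (le_normcD _ _) _; by rewrite lerD2l.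
Qed.

Lemma ncX (x : R[i]) m : nc (x ^+ m) = nc x ^+ m.
Proof.
elim: m => [|m IH]; first by rewrite !expr0 ComplexField.Normc.normc1.
by rewrite !exprS ComplexField.Normc.normcM IH.
Qed.

Lemma ncR (x : R) : nc (x%:C)%C = `|x|.
Proof. by rewrite /= expr0n /= addr0 sqrtr_sqr. Qed.

Lemma powsum_bound n (x : 'I_n -> R[i]) (K q : R) N : 0 <= q ->
  (forall m, (N <= m)%N -> nc (\sum_i x i ^+ m) <= K * q ^+ m) ->
  forall i, nc (x i) <= q.
Proof.
move=> q0 H i0.
have [c c0 [Q HQ]] := @powsum_filter R[i] n x i0.
have nc0 : 0 < nc c.
  rewrite lt_def nc_ge0 andbT; apply/eqP => /ComplexField.Normc.eq0_normc.
  by move/eqP: c0.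
apply: (@growth_le R (nc (x i0)) q (nc c)
   (\sum_(a < size Q) nc Q`_a * K * q ^+ a) N nc0 q0 (nc_ge0 _)).
move=> m Nm.
rewrite -ncX -ComplexField.Normc.normcM -HQ.
apply: le_trans (nc_sum _ _ _) _.
rewrite mulr_suml; apply: ler_sum => a _.
rewrite ComplexField.Normc.normcM -mulrA -mulrA; apply: ler_wpM2l; first exact: nc_ge0.
rewrite -mulrA -exprD addnC; apply: H; apply: leq_trans Nm _; exact: leq_addl.
Qed.

End CPow.
Section Trig.
Variable F : comPzRingType.
Lemma trig_mul n (A B : 'M[F]_n) : is_trig_mx A -> is_trig_mx B ->
  is_trig_mx (A *m B) /\ forall i, (A *m B) i i = A i i * B i i.
Proof.
move=> /is_trig_mxP hA /is_trig_mxP hB; split.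
  apply/is_trig_mxP => i j lij; rewrite mxE big1 // => k _.
  have [ik|ki] := ltnP i k; first by rewrite hA // mul0r.
  by rewrite hB ?mulr0 // (leq_ltn_trans ki lij).
move=> i; rewrite mxE (bigD1 i) //= big1 ?addr0 // => k /negbTE nki.
have [ik|ki] := ltnP i k; first by rewrite hA // mul0r.
rewrite hB ?mulr0 //; rewrite leq_eqVlt in ki; case/orP: ki => // /eqP kE.
by move: nki; rewrite -val_eqE /= kE eqxx.
Qed.
End Trig.

Section Spec.
Variable R : realType.
Local Notation nc := (@ComplexField.Normc.normc R).
Local Notation C := R[i].

Definition rcm : {rmorphism R -> R[i]} := real_complex R.
Definition toC n (M : 'M[R]_n) : 'M[C]_n := map_mx (fun x => (x%:C)%C) M.

Lemma toC_tr n (M : 'M[R]_n) : \tr (toC M) = ((\tr M)%:C)%C.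
Proof. exact: (trace_map_mx rcm M). Qed.

Lemma toCM n (A B : 'M[R]_n) : toC (A *m B) = toC A *m toC B.
Proof. exact: (map_mxM rcm A B). Qed.

Lemma toC1 n : toC (1%:M : 'M[R]_n) = 1%:M.
Proof. exact: (map_mx1 rcm n). Qed.

Lemma schurR d (M : 'M[R]_d.+1) : exists P T : 'M[C]_d.+1,
  [/\ P \in unitmx, T = P *m toC M *m invmx P & is_trig_mx T].
Proof.
have [P Pu Ht] := @Schur C d.+1 (toC M) isT.
have PU := unitarymx_unit Pu.
exists P, (conjmx P (toC M)); split => //; by rewrite conjumx.
Qed.

End Spec.


Section Spec2.
Variable R : realType.
Local Notation nc := (@ComplexField.Normc.normc R).
Local Notation C := R[i].

Lemma eig_sim n (A B P : 'M[C]_n) a : P \in unitmx -> B = P *m A *m invmx P ->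
  eigenvalue A a = eigenvalue B a.
Proof.
move=> Pu ->; apply/eigenvalueP/eigenvalueP => [[v Hv nz]|[v Hv nz]].
  exists (v *m invmx P).
    by rewrite !mulmxA mulmxKV // Hv -scalemxAl.
  apply: contra nz => /eqP H; apply/eqP.
  by rewrite -(mulmxKV Pu v) H mul0mx.
exists (v *m P).
  have -> : v *m P *m A = v *m (P *m A *m invmx P) *m P.
    by rewrite !mulmxA mulmxKV.
  by rewrite Hv -scalemxAl.
apply: contra nz => /eqP H; apply/eqP.
by rewrite -(mulmxK Pu v) H mul0mx.
Qed.

Lemma eig_trig n (T : 'M[C]_n) a : is_trig_mx T ->
  eigenvalue T a <-> exists i, a = T i i.
Proof.
move=> Tt; rewrite eigenvalue_root_char char_poly_trig //.
rewrite -(big_map (fun i => T i i) xpredT (fun b => 'X - b%:P)) root_prod_XsubC.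
split => [/mapP [i _ ->]|[i ->]]; first by exists i.
by apply/mapP; exists i => //; rewrite mem_index_enum.
Qed.

Section SR.
Variables (d : nat) (M : 'M[R]_d.+1) (P T : 'M[C]_d.+1).
Hypotheses (Pu : P \in unitmx) (HT : T = P *m toC M *m invmx P) (Tt : is_trig_mx T).

Lemma sr_set : [set nc lam | lam in [set lam | eigenvalue (toC M) lam]] =
  [set nc (T i i) | i in [set: 'I_d.+1]].
Proof.
apply/seteqP; split => x /=.
  case=> lam /= Hl <-.
  rewrite (eig_sim _ Pu HT) in Hl.
  have [i ->] := (eig_trig _ Tt).1 Hl.
  by exists i.
case=> i _ <-; exists (T i i) => //=.
rewrite (eig_sim _ Pu HT); apply/(eig_trig _ Tt); by exists i.
Qed.

Lemma sr_hassup : has_sup [set nc (T i i) | i in [set: 'I_d.+1]].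
Proof.
split; first by exists (nc (T ord0 ord0)), ord0.
exists (\sum_i nc (T i i)) => _ [i _ <-].
rewrite (bigD1 i) //= lerDl sumr_ge0 // => j _; exact: nc_ge0.
Qed.

Lemma sr_ge i : nc (T i i) <= spec_rad M.
Proof.
rewrite /spec_rad -/(toC M) sr_set; apply: sup_upper_bound; first exact: sr_hassup.
by exists i.
Qed.

Lemma sr_le q : (forall i, nc (T i i) <= q) -> spec_rad M <= q.
Proof.
move=> H; rewrite /spec_rad -/(toC M) sr_set; apply: ge_sup.
  by exists (nc (T ord0 ord0)), ord0.
by move=> _ [i _ <-].
Qed.
End SR.

Definition pw n (M : 'M[R]_n) m := iter m (mulmx M) 1%:M.

Lemma trig_pow d (T : 'M[C]_d.+1) m : is_trig_mx T ->
  is_trig_mx (T ^+ m) /\ forall i, (T ^+ m) i i = T i i ^+ m.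
Proof.
move=> Tt; elim: m => [|m [IH1 IH2]].
  split; first by apply: is_diag_mx_is_trig; exact: scalar_mx_is_diag.
  by move=> i; rewrite !expr0 mxE eqxx.
have [H1 H2] := trig_mul Tt IH1.
split; first by rewrite exprS.
by move=> i; rewrite exprS H2 IH2 -exprS.
Qed.

Lemma pwE d (M : 'M[R]_d.+1) m : pw M m = M ^+ m.
Proof. by elim: m => [|m IH] //=; rewrite /pw /= -/(pw M m) IH exprS. Qed.

Lemma toCX d (M : 'M[R]_d.+1) m : toC (M ^+ m) = toC M ^+ m.
Proof.
elim: m => [|m IH]; first by rewrite !expr0 toC1.
by rewrite !exprS -IH; exact: toCM.
Qed.

Lemma conjX d (A P : 'M[C]_d.+1) m : P \in unitmx ->
  (invmx P *m A *m P) ^+ m = invmx P *m A ^+ m *m P.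
Proof.
move=> Pu; elim: m => [|m IH].
  by rewrite !expr0 mulmx1 mulVmx.
rewrite exprS IH exprS.
change ((invmx P *m A *m P) *m (invmx P *m A ^+ m *m P) = invmx P *m (A *m A ^+ m) *m P).
by rewrite !mulmxA mulmxK.
Qed.

Lemma sr0 n (M : 'M[R]_n) : 0 <= spec_rad M.
Proof.
case: n M => [|d] M.
  rewrite /spec_rad.
  have -> : [set nc lam | lam in [set lam | eigenvalue (map_mx (fun x => (x%:C)%C) M) lam]] = set0.
    apply/seteqP; split => // x [lam /= + _].
    by rewrite /eigenvalue [eigenspace _ _]flatmx0 eqxx.
  by rewrite sup0.
have [P [T [Pu HT Tt]]] := schurR M.
exact: le_trans (nc_ge0 _) (sr_ge Pu HT Tt ord0).
Qed.

Lemma toC_conj d (M : 'M[R]_d.+1) P T : P \in unitmx -> T = P *m toC M *m invmx P ->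
  toC M = invmx P *m T *m P.
Proof. by move=> Pu ->; rewrite !mulmxA mulVmx // mul1mx mulmxKV. Qed.

Lemma tr_conj d (A P : 'M[C]_d.+1) : P \in unitmx -> \tr (invmx P *m A *m P) = \tr A.
Proof. by move=> Pu; rewrite mxtrace_mulC mulmxA mulmxV // mul1mx. Qed.

Lemma srtr n (M : 'M[R]_n) : `|\tr M| <= n%:R * spec_rad M.
Proof.
case: n M => [|d] M.
  by rewrite /mxtrace big_ord0 normr0 mul0r.
have [P [T [Pu HT Tt]]] := schurR M.
rewrite -ncR -toC_tr (toC_conj Pu HT) tr_conj // /mxtrace.
apply: le_trans (nc_sum _ _ _) _.
apply: le_trans (ler_sum _ (fun i _ => sr_ge Pu HT Tt i)) _.
by rewrite sumr_const card_ord mulr_natl.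
Qed.

Lemma srpow n (M : 'M[R]_n) (K q : R) N : 0 <= q ->
  (forall m, (N <= m)%N -> `|\tr (pw M m)| <= K * q ^+ m) -> spec_rad M <= q.
Proof.
case: n M => [|d] M q0 H.
  rewrite /spec_rad.
  have -> : [set nc lam | lam in [set lam | eigenvalue (map_mx (fun x => (x%:C)%C) M) lam]] = set0.
    apply/seteqP; split => // x [lam /= + _].
    by rewrite /eigenvalue [eigenspace _ _]flatmx0 eqxx.
  by rewrite sup0.
have [P [T [Pu HT Tt]]] := schurR M.
apply: (sr_le Pu HT Tt); apply: (@powsum_bound R _ (fun i => T i i) K q N q0).
move=> m Nm; have := H m Nm.
rewrite pwE -ncR -toC_tr toCX (toC_conj Pu HT) conjX // tr_conj // /mxtrace.
have [_ H2] := trig_pow m Tt.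
by under eq_bigr => i _ do rewrite H2.
Qed.
End Spec2.


Section Comb.
Variables (R : realType) (n L : nat) (F : 'I_L -> 'M[R]_n).
Hypothesis L0 : (0 < L)%N.
Local Notation M := 'M[R]_n.

Fixpoint prodL (g : nat -> M) m : M :=
  match m with 0 => 1%:M | m'.+1 => g 0%N *m prodL (fun i => g i.+1) m' end.

Lemma prodL_ext g g' m : (forall i, (i < m)%N -> g i = g' i) -> prodL g m = prodL g' m.
Proof.
elim: m g g' => [//|m IH] g g' H /=.
rewrite H // (IH (fun i => g i.+1) (fun i => g' i.+1)) // => i Hi; exact: H.
Qed.

Lemma prodL_add g m1 m2 :
  prodL g (m1 + m2) = prodL g m1 *m prodL (fun i => g (m1 + i)%N) m2.
Proof.
elim: m1 g => [|m1 IH] g /=; first by rewrite mul1mx.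
by rewrite IH mulmxA.
Qed.

Lemma big_prodL t (G : 'I_t -> M) g : (forall s : 'I_t, g (s : nat) = G s) ->
  \big[@mulmx R n n n/1%:M]_(s < t) G s = prodL g t.
Proof.
elim: t G g => [|t IH] G g H; first by rewrite big_ord0.
rewrite big_ord_recl /= -H; congr (_ *m _).
by apply: IH => s; rewrite -H.
Qed.

Lemma pw_prodL (A : M) m : pw A m = prodL (fun _ => A) m.
Proof. by elim: m => [|m IH] //=; rewrite -IH. Qed.

Definition VP m (V : M) := exists f : nat -> 'I_L, V = prodL (fun i => F (f i)) m.

Lemma VP_mul m1 m2 V1 V2 : VP m1 V1 -> VP m2 V2 -> VP (m1 + m2) (V1 *m V2).
Proof.
move=> [f1 ->] [f2 ->].
exists (fun i => if (i < m1)%N then f1 i else f2 (i - m1)%N).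
rewrite prodL_add; congr (_ *m _).
  by apply: prodL_ext => i ->.
apply: prodL_ext => i _; rewrite ltnNge leq_addr /=; congr (F (f2 _)).
by rewrite addKn.
Qed.

Definition CV m (C : M) := exists s : seq (R * M),
  [/\ forall x, x \in s -> 0 <= x.1, \sum_(x <- s) x.1 = 1,
      forall x, x \in s -> VP m x.2 & C = \sum_(x <- s) x.1 *: x.2].

Lemma CV1 : CV 0 1%:M.
Proof.
exists [:: (1, 1%:M)]; split.
- by move=> x; rewrite inE => /eqP -> /=.
- by rewrite big_seq1.
- by move=> x; rewrite inE => /eqP ->; exists (fun _ => Ordinal L0).
- by rewrite big_seq1 scale1r.
Qed.

Lemma CV_mul m1 m2 C1 C2 : CV m1 C1 -> CV m2 C2 -> CV (m1 + m2) (C1 *m C2).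
Proof.
move=> [s1 [p1 w1 v1 ->]] [s2 [p2 w2 v2 ->]].
exists [seq (x.1 * y.1, x.2 *m y.2) | x <- s1, y <- s2]; split.
- move=> z /allpairsP [[x y] /= [xs ys ->]] /=.
  by rewrite mulr_ge0 //; [apply: p1|apply: p2].
- rewrite big_allpairs_dep /=.
  under eq_bigr => x _ do rewrite -mulr_sumr w2 mulr1.
  exact: w1.
- move=> z /allpairsP [[x y] /= [xs ys ->]] /=.
  exact: VP_mul (v1 _ xs) (v2 _ ys).
- rewrite big_allpairs_dep /= mulmx_suml; apply: eq_bigr => x _.
  rewrite -scalemxAl mulmx_sumr scaler_sumr; apply: eq_bigr => y _.
  by rewrite -scalemxAr scalerA.
Qed.

Lemma CV_hull B : conv_hull F B -> CV 1 B.
Proof.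
move=> [w [w0 [w1 ->]]].
exists [seq (w l, F l) | l <- enum 'I_L]; split.
- by move=> x /mapP [l _ ->] /=.
- by rewrite big_map big_enum.
- move=> x /mapP [l _ ->] /=; exists (fun _ => l) => /=; by rewrite mulmx1.
- by rewrite big_map big_enum.
Qed.

Lemma CV_prodL g m : (forall i, (i < m)%N -> conv_hull F (g i)) -> CV m (prodL g m).
Proof.
elim: m g => [|m IH] g H /=; first exact: CV1.
apply: (CV_mul (m1 := 1)); first exact: CV_hull (H 0%N isT).
by apply: IH => i Hi; apply: H.
Qed.

Lemma CV_pw t A m : CV t A -> CV (m * t) (pw A m).
Proof.
move=> HA; elim: m => [|m IH]; first exact: CV1.
rewrite /pw /= -/(pw A m).
exact: CV_mul HA IH.
Qed.

Lemma CV_tr m C (b : R) : CV m C -> (forall V, VP m V -> `|\tr V| <= b) -> `|\tr C| <= b.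
Proof.
move=> [s [p w v ->]] H.
rewrite raddf_sum /=.
apply: le_trans (ler_norm_sum _ _ _) _.
apply: le_trans (_ : \sum_(x <- s) x.1 * b <= _); last by rewrite -mulr_suml w mul1r.
rewrite big_seq_cond [X in _ <= X]big_seq_cond; apply: ler_sum => x /andP [xs _].
rewrite mxtraceZ normrM ger0_norm ?p //; apply: ler_wpM2l; first exact: p.
exact: H (v _ xs).
Qed.
End Comb.


Section Lim.
Variable R : realType.
Local Open Scope ereal_scope.

Lemma limsup_mono (u v : nat -> \bar R) : (forall t, u t <= v t) ->
  limn_esup u <= limn_esup v.
Proof.
move=> H; rewrite /limn_esup /limf_esup.
apply: le_ereal_inf_tmp => _ [V FV <-].
apply: le_trans (ereal_inf_lbound _) _; first by exists V.
apply: ge_ereal_sup => _ [t Vt <-].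
apply: le_trans (H t) _; apply: ereal_sup_ubound; by exists t.
Qed.

Lemma limsup_le_ev (v : nat -> \bar R) J N : (forall t, (N <= t)%N -> v t <= J) ->
  limn_esup v <= J.
Proof.
move=> H; rewrite /limn_esup /limf_esup.
apply: le_trans (ereal_inf_lbound _) _.
  by exists [set t | (N <= t)%N] => //; exists N.
by apply: ge_ereal_sup => _ [t Nt <-]; apply: H.
Qed.

Lemma limsup_lt (u : nat -> \bar R) s : limn_esup u < s ->
  exists N, forall t, (N <= t)%N -> u t < s.
Proof.
move/ereal_inf_lt => [_ [V [N _ HN] <-] Hlt].
exists N => t Nt; apply: le_lt_trans Hlt; apply: ereal_sup_ubound.
by exists t => //; apply: HN.
Qed.

Lemma le_from_gt (X J : \bar R) : (forall s : R, J < s%:E -> X <= s%:E) -> X <= J.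
Proof.
move=> H; case: J H => [j| |] H.
- case: X H => [x| |] H //.
    rewrite lee_fin leNgt; apply/negP => jx.
    have := H ((j + x) / 2)%R; rewrite !lte_fin !lee_fin (midf_lt jx).1 => /(_ isT).
    by rewrite leNgt (midf_lt jx).2.
  by have := H (j + 1)%R; rewrite lte_fin ltrDl ltr01 => /(_ isT).
  exact: leNye.
- by rewrite leey.
- case: X H => [x| |] H //.
    have := H (x - 1)%R (ltNyr _); rewrite lee_fin.
    move=> h; exfalso; move: h; apply/negP; rewrite -ltNge; lra.
  by have := H 0%R (ltNyr _); rewrite leNgt ltey.
Qed.
End Lim.

Section JSR.
Variables (R : realType) (n L : nat) (F : 'I_L -> 'M[R]_n).
Hypothesis L0 : (0 < L)%N.
Local Notation M := 'M[R]_n.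

Lemma F_hull l : conv_hull F (F l).
Proof.
exists (fun l' => (l' == l)%:R); split; first by move=> l'; rewrite ler0n.
split; first by rewrite (bigD1 l) //= eqxx big1 ?addr0 // => i /negbTE ->.
rewrite (bigD1 l) //= eqxx scale1r big1 ?addr0 // => i /negbTE ->.
by rewrite scale0r.
Qed.

Lemma powR_inv_pow (x : R) m : (0 < m)%N -> 0 <= x -> (x `^ (m%:R^-1)) ^+ m = x.
Proof.
move=> m0 x0; rewrite -powR_mulrn ?powR_ge0 // -powRrM mulVf ?powRr1 //.
by rewrite pnatr_eq0 -lt0n.
Qed.

Lemma pow_powR_inv (x : R) m : (0 < m)%N -> 0 <= x -> (x ^+ m) `^ (m%:R^-1) = x.
Proof.
move=> m0 x0; rewrite -powR_mulrn // -powRrM mulfV ?powRr1 //.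
by rewrite pnatr_eq0 -lt0n.
Qed.

Lemma jsr_hull : jsr (conv_hull F) = jsr [set F l | l in [set: 'I_L]].
Proof.
apply/eqP; rewrite eq_le; apply/andP; split; last first.
  apply: limsup_mono => t; apply: ereal_sup_le => _ [Ms HMs <-].
  exists Ms => // s; have [l _ <-] := HMs s; exact: F_hull.
set J := jsr _.
apply: (limsup_le_ev (N := 1)) => t t1.
apply: le_from_gt => s Js.
have [N HN] := limsup_lt Js.
pose N' := maxn N 1.
have HV m V : (N' <= m)%N -> VP F m V -> spec_rad V `^ (m%:R^-1) < s.
  move=> Nm [f ->].
  rewrite -lte_fin; apply: le_lt_trans (HN m (leq_trans (leq_maxl _ _) Nm)).
  apply: ereal_sup_ubound.
  exists (fun i : 'I_m => F (f i)).
    by move=> i; exists (f i).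
  by rewrite (big_prodL (g := fun i => F (f i))).
have s0 : 0 <= s.
  have := HV N' (prodL (fun _ => F (Ordinal L0)) N') (leqnn _).
  move=> /(_ (ex_intro _ (fun _ => Ordinal L0) erefl)).
  move=> h; apply: ltW; apply: le_lt_trans h; exact: powR_ge0.
have HV2 m V : (N' <= m)%N -> VP F m V -> spec_rad V <= s ^+ m.
  move=> Nm HVm; have m0 : (0 < m)%N by apply: leq_trans Nm; exact: leq_maxr.
  rewrite -(powR_inv_pow m0 (sr0 V)).
  rewrite lerXn2r ?nnegrE ?powR_ge0 //; exact: ltW (HV _ _ Nm HVm).
apply: ge_ereal_sup => _ [Ms HMs <-].
set Mt := \big[@mulmx R n n n/1%:M]_(i < t) Ms i.
pose g i := if @insub nat (fun k => (k < t)%N) 'I_t i is Some j then Ms j else 1%:M.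
have HMt : Mt = prodL g t.
  by apply: big_prodL => i; rewrite /g valK.
have CVt : CV F t Mt.
  rewrite HMt; apply: (CV_prodL L0) => i it; rewrite /g.
  case: insubP => [j _ _|]; first exact: HMs.
  by rewrite it.
have sp : spec_rad Mt <= s ^+ t.
  apply: (@srpow R n Mt n%:R (s ^+ t) N'); first exact: exprn_ge0.
  move=> j Nj; rewrite -exprM mulnC.
  apply: (CV_tr (CV_pw L0 j CVt)) => V HVj.
  apply: le_trans (srtr V) _; apply: ler_wpM2l => //.
  apply: HV2 HVj; apply: leq_trans Nj _; rewrite mulnC; exact: leq_pmull.
rewrite lee_fin -(pow_powR_inv t1 s0).
apply: ge0_ler_powR => //.
- by rewrite nnegrE sr0.
- by rewrite nnegrE exprn_ge0.
Qed.
End JSR.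


Section Seg.
Variable R : realType.

Definition ad (A : set R) x := forall e, 0 < e -> exists y, A y /\ `|y - x| < e.

Lemma claimA (I : finType) (T : I -> set R) (S : {set I}) a b : a < b ->
  (forall x, a <= x < b -> exists2 l, l \in S & T l x) ->
  exists2 j, j \in S & ad [set x | T j x /\ a <= x < b] b.
Proof.
move=> ab Hcov; apply: contrapT => Hn.
have Hj j : exists e : R, j \in S -> 0 < e /\
   forall y, T j y -> a <= y < b -> e <= `|y - b|.
  have [jS|jS] := boolP (j \in S); last by exists 1.
  have : ~ ad [set x | T j x /\ a <= x < b] b by move=> H; apply: Hn; exists j.
  move=> /existsNP [e /not_implyP [e0 /forallNP He]].
  exists e => _; split => // y Ty /andP[ay yb].
  rewrite leNgt; apply/negP => lt; apply: (He y); split => //; split => //.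
  by apply/andP.
have [e He] := choice Hj.
pose d := \big[Order.min/(b - a)]_(j in S) e j.
have d0 : 0 < d.
  rewrite /d; elim/big_ind: _ => //; first by rewrite subr_gt0.
    by move=> x y x0 y0; rewrite lt_min x0 y0.
  by move=> j jS; have [] := He j jS.
have dba : d <= b - a by rewrite /d bigmin_le_id.
have hx : a <= b - d / 2 < b by apply/andP; split; lra.
have [l lS Tl] := Hcov _ hx.
have [_ Hl] := He l lS.
have := Hl _ Tl hx.
have : d <= e l by rewrite /d (bigmin_le_cond _ _ lS).
rewrite (_ : b - d / 2 - b = - (d / 2)); last by lra.
rewrite normrN ger0_norm; last by lra.
lra.
Qed.

Lemma seg1d (V : lmodType R) (I : finType) (T : I -> set R) (phi : R -> V) (v : I -> V) :
  (forall l s t, ad (T l) s -> ad (T l) t -> phi t - phi s = (t - s) *: v l) ->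
  forall m (S : {set I}), #|S| = m -> forall a b, a < b ->
  (forall x, a <= x < b -> exists2 l, l \in S & T l x) ->
  exists w : I -> R, [/\ forall l, 0 <= w l, \sum_l w l = b - a &
                        phi b - phi a = \sum_l w l *: v l].
Proof.
move=> Haff; elim=> [|m IH] S HS a b ab Hcov.
  have := Hcov a; rewrite lexx ab => /(_ isT) [l lS _].
  by move: HS; rewrite (cardD1 l) lS.
have [j jS Hadj] := claimA ab Hcov.
pose E := [set x | T j x /\ a <= x < b].
have [x0 [Ex0 _]] := Hadj 1 ltr01.
have hinf : has_inf E.
  split; first by exists x0.
  by exists a => y [_ /andP [ay _]].
set c := inf E.
have ac : a <= c by apply: lb_le_inf; [exists x0 | move=> y [_ /andP[ay _]]].
have cb : c <= b.
  by apply: le_trans (ge_inf (proj2 hinf) Ex0) _; case: Ex0 => _ /andP[_ /ltW].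
have adc : ad (T j) c.
  move=> e e0; have [y Ey ye] := inf_adherent e0 hinf.
  exists y; split; first by case: Ey.
  have := ge_inf (proj2 hinf) Ey; rewrite -/c => cy.
  rewrite ger0_norm; last by rewrite subr_ge0.
  lra.
have adb : ad (T j) b.
  move=> e e0; have [y [[Ty _] ye]] := Hadj e e0; by exists y.
have Hnot x : T j x -> a <= x -> x < c -> False.
  move=> Tx ax xc; have Ex : E x by split => //; apply/andP; split => //; exact: lt_le_trans cb.
  by have := ge_inf (proj2 hinf) Ex; rewrite -/c leNgt xc.
have Hjb := Haff j c b adc adb.
have [ceq|cne] := eqVneq c a.
  exists (fun l => if l == j then b - a else 0); split.
  - by move=> l; case: ifP => // _; rewrite subr_ge0 ltW.
  - by rewrite (bigD1 j) //= eqxx big1 ?addr0 // => i /negbTE ->.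
  - rewrite (bigD1 j) //= eqxx big1 ?addr0; last by move=> i /negbTE ->; rewrite scale0r.
    by rewrite -ceq.
have ac' : a < c by rewrite lt_def cne ac.
have HS' : #|S :\ j| = m by move: HS; rewrite (cardsD1 j) jS => -[].
have Hcov' x : a <= x < c -> exists2 l, l \in S :\ j & T l x.
  move=> /andP [ax xc]; have := Hcov x; rewrite ax (lt_le_trans xc cb) => /(_ isT) [l lS Tl].
  exists l => //; rewrite !inE lS andbT; apply/eqP => lj.
  by apply: (Hnot x) => //; rewrite -lj.
have [w [w0 w1 w2]] := IH _ HS' a c ac' Hcov'.
exists (fun l => w l + (if l == j then b - c else 0)); split.
- by move=> l; rewrite addr_ge0 //; case: ifP => // _; rewrite subr_ge0.
- rewrite big_split /= w1 (bigD1 j) //= eqxx big1 ?addr0; last by move=> i /negbTE ->.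
  lra.
- under eq_bigr => l _ do rewrite scalerDl.
  rewrite big_split /= -w2 (bigD1 j) //= eqxx big1 ?addr0; last by move=> i /negbTE ->; rewrite scale0r.
  by rewrite -Hjb addrC addrA subrK.
Qed.

Lemma cont_eps (f : R -> R) x e : continuous f -> 0 < e ->
  exists2 d, 0 < d & forall y, `|y - x| < d -> `|f y - f x| < e.
Proof.
move=> fc e0; have := fc x => /cvgrPdist_lt /(_ e e0) /nbhs_ballP [d d0 Hd].
exists d => // y yx; rewrite distrC; apply: Hd.
by rewrite /ball /= distrC.
Qed.

Lemma ad_const (f : R -> R) (A : set R) k : continuous f ->
  (forall y, A y -> f y = k) -> forall x, ad A x -> f x = k.
Proof.
move=> fc HA x adx; apply/eqP; apply: contrapT => /negP ne.
have e0 : 0 < `|f x - k| by rewrite normr_gt0 subr_eq0.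
have [d d0 Hd] := cont_eps x fc e0.
have [y [Ay yx]] := adx d d0.
have := Hd y yx; rewrite HA // distrC; by rewrite ltxx.
Qed.

Lemma cont_add (T : topologicalType) (G H : T -> R) :
  continuous G -> continuous H -> continuous (fun y => G y + H y).
Proof. move=> HG HH y; exact: (continuousD (HG y) (HH y)). Qed.

Lemma cont_opp (T : topologicalType) (G : T -> R) :
  continuous G -> continuous (fun y => - G y).
Proof. move=> HG y; exact: (continuousN (HG y)). Qed.

Lemma ad_affine q (Fm : R -> 'cV[R]_q) (A : set R) (v : 'cV[R]_q) :
  (forall i, continuous (fun t => Fm t i 0)) ->
  (forall s t, A s -> A t -> Fm t - Fm s = (t - s) *: v) ->
  forall s t, ad A s -> ad A t -> Fm t - Fm s = (t - s) *: v.
Proof.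
move=> Fc onA s t As At; have [s0 [As0 _]] := As 1 ltr01.
apply/matrixP => i j; rewrite ord1 !mxE.
pose e u := Fm u i 0 - u * v i 0.
have ec : continuous e.
  apply: cont_add; first exact: Fc.
  apply: cont_opp; change (continuous ((fun u : R => u) \* (fun=> v i 0))) => u.
  apply: continuousM; [exact: cvg_id | exact: cst_continuous].
have He u : A u -> e u = e s0.
  move=> Au; rewrite /e; have := onA s0 u As0 Au.
  move/matrixP => /(_ i 0); rewrite !mxE => H.
  rewrite mulrBl in H; lra.
have Et := ad_const ec He At; have Es := ad_const ec He As.
move: Et Es; rewrite /e mulrBl => Et Es; lra.
Qed.
End Seg.


Section Geo.
Variables (R : realType) (p k r L : nat).
Variable Z : 'I_L -> set 'cV[R]_p.
Variable phibar : 'I_k.+1 -> 'I_L -> 'cV[R]_p.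
Variable Phi : 'I_k.+1 -> 'I_L -> 'M[R]_p.
Variable alpha : 'M[R]_(p, r).
Variables (mubar : 'I_L -> 'cV[R]_r) (beta : 'I_L -> 'M[R]_(p, r)).
Hypothesis Zpart : convex_partition Z.

Lemma Z_cover x : exists l, Z l x.
Proof.
have [_ [_ Hc]] := Zpart.
have : [set: 'cV[R]_p] x by [].
by rewrite -Hc => -[l _ Hl]; exists l.
Qed.

Lemma Z_disj l l' x : Z l x -> Z l' x -> l = l'.
Proof.
move=> H1 H2; apply/eqP; apply: contrapT => /negP ne.
have [_ [Hd _]] := Zpart.
by have := Hd _ _ ne; rewrite -subset0 => /(_ x); apply.
Qed.

Lemma pwaff_at q (a : 'I_L -> 'cV[R]_q) (A : 'I_L -> 'M[R]_(q, p)) l x :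
  Z l x -> pwaff Z a A x = a l + A l *m x.
Proof.
move=> Zl; rewrite /pwaff (bigD1 l) //= big1 ?addr0.
  by rewrite indicE mem_set // scale1r.
move=> l' nl; rewrite indicE memNset ?scale0r //.
by move=> Zl'; move/eqP: nl; apply; apply: Z_disj Zl' Zl.
Qed.

Lemma fVAR_at i l x : Z l x -> fVAR Z phibar Phi i x = phibar i l + Phi i l *m x.
Proof. exact: pwaff_at. Qed.


Hypothesis Hrank : \rank alpha = r.
Hypothesis Hpibar : forall l, pibarVAR phibar l = alpha *m mubar l.
Hypothesis HPi : forall l, PiVAR Phi l = alpha *m (beta l)^T.

Definition La := (pinvmx alpha^T)^T.

Lemma La_alpha : La *m alpha = 1%:M.
Proof.
have rf : row_free alpha^T by rewrite /row_free mxrank_tr Hrank.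
have := mulmxKp rf (1%:M : 'M[R]_r); rewrite mul1mx => H.
by apply: trmx_inj; rewrite trmx_mul /La trmxK trmx1.
Qed.

Definition piF x : 'cV[R]_p :=
  - fVAR Z phibar Phi ord0 x + \sum_(i < k.+1 | (0 < i)%N) fVAR Z phibar Phi i x.

Lemma theta_pi x : thetaVAR Z mubar beta x = La *m piF x.
Proof.
have [l Zl] := Z_cover x.
rewrite /thetaVAR (pwaff_at _ _ Zl) /piF (fVAR_at _ Zl).
under eq_bigr => i _ do rewrite (fVAR_at _ Zl).
have -> : - (phibar ord0 l + Phi ord0 l *m x) +
   \sum_(i < k.+1 | (0 < i)%N) (phibar i l + Phi i l *m x) =
   pibarVAR phibar l + PiVAR Phi l *m x.
  rewrite big_split /= /pibarVAR /PiVAR -mulmx_suml.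
  rewrite mulNmx mulmxBl opprD addrACA !opprB.
  by rewrite [- phibar _ _ + _]addrC [- (Phi _ _ *m x) + _]addrC.
rewrite Hpibar HPi -mulmxA -mulmxDr mulmxA La_alpha mul1mx.
by rewrite /thetaVAR.
Qed.

Definition Mmat l : 'M[R]_(r + k.-1 * p, p) := col_mx ((beta l)^T) (bGammaVAR Phi l).
Definition Jmat l : 'M[R]_(r + k.-1 * p, p) :=
  col_mx ((beta l)^T *m invmx (Phi ord0 l)) (bGammaVAR Phi l *m invmx (Phi ord0 l)).

Lemma gVAR_at j l x : Z l x ->
  gVAR Z phibar Phi j x = - \sum_(i < k.+1 | (j < i)%N) phibar i l + GammaVAR Phi j l *m x.
Proof.
move=> Zl; rewrite /gVAR /GammaVAR.
under eq_bigr => i _ do rewrite (fVAR_at _ Zl).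
by rewrite big_split /= opprD mulNmx mulmx_suml.
Qed.

Lemma bgVAR_at l x : Z l x -> bgVAR Z phibar Phi x =
  stackv k.-1 (fun a => - \sum_(i < k.+1 | (a.+1 < i)%N) phibar i l) + bGammaVAR Phi l *m x.
Proof.
move=> Zx; apply/matrixP => i j; rewrite ord1 /bgVAR /stackv [in LHS]mxE (gVAR_at _ Zx).
rewrite [in LHS]mxE [in RHS]mxE [in RHS]mxE; congr (_ + _).
rewrite !mxE; apply: eq_bigr => a _; by rewrite !mxE.
Qed.

Lemma btheta_aff l x x' : Z l x -> Z l x' ->
  bthetaVAR Z phibar Phi mubar beta x - bthetaVAR Z phibar Phi mubar beta x' =
  Mmat l *m (x - x').
Proof.
move=> Zx Zx'; rewrite /bthetaVAR /Mmat mul_col_mx opp_col_mx add_col_mx.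
congr col_mx.
  rewrite /thetaVAR (pwaff_at _ _ Zx) (pwaff_at _ _ Zx') mulmxBr.
  by rewrite opprD addrACA subrr add0r.
rewrite (bgVAR_at Zx) (bgVAR_at Zx') opprD addrACA subrr add0r.
by rewrite -mulmxBr.
Qed.

Variable f0inv : 'cV[R]_p -> 'cV[R]_p.
Hypothesis Hf0K : cancel f0inv (fVAR Z phibar Phi ord0).
Hypothesis HPhi0 : forall l, Phi ord0 l \in unitmx.

Definition hF y := bthetaVAR Z phibar Phi mubar beta (f0inv y).

Lemma hF_aff l y y' : Z l (f0inv y) -> Z l (f0inv y') ->
  hF y - hF y' = Jmat l *m (y - y').
Proof.
move=> Zy Zy'; rewrite /hF (btheta_aff Zy Zy').
have Ey : y - y' = Phi ord0 l *m (f0inv y - f0inv y').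
  rewrite -{1}(Hf0K y) -{1}(Hf0K y') (fVAR_at _ Zy) (fVAR_at _ Zy').
  by rewrite opprD addrACA subrr add0r mulmxBr.
by rewrite Ey /Jmat -mul_col_mx -/(Mmat l) -mulmxA (mulmxA (invmx _)) mulVmx // mul1mx.
Qed.

Hypothesis Hfc : forall i, continuous (fVAR Z phibar Phi i).
Hypothesis Hinvc : continuous f0inv.

Lemma cont_sumR (T : topologicalType) (I : Type) (rs : seq I) (P : pred I)
   (G : I -> T -> R) : (forall i, continuous (G i)) ->
  continuous (fun y => \sum_(i <- rs | P i) G i y).
Proof.
move=> HG; elim: rs => [|i rs IH].
  have -> : (fun y => \sum_(i <- [::] | P i) G i y) = (fun=> 0) by apply: funext => y; rewrite big_nil.
  exact: cst_continuous.
have [Pi|nPi] := boolP (P i).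
  have -> : (fun y => \sum_(j <- i :: rs | P j) G j y) =
            (fun y => G i y + \sum_(j <- rs | P j) G j y).
    by apply: funext => y; rewrite big_cons Pi.
  by move=> y; apply: continuousD; [exact: HG | exact: IH].
have -> : (fun y => \sum_(j <- i :: rs | P j) G j y) =
          (fun y => \sum_(j <- rs | P j) G j y).
  by apply: funext => y; rewrite big_cons (negbTE nPi).
exact: IH.
Qed.

Lemma cont_cmul (T : topologicalType) (c : R) (G : T -> R) :
  continuous G -> continuous (fun y => c * G y).
Proof.
move=> HG; change (continuous ((fun=> c) \* G)) => y.
apply: continuousM; [exact: cst_continuous | exact: HG].
Qed.


Lemma fcomp_cont i a : continuous (fun y => fVAR Z phibar Phi i (f0inv y) a 0).
Proof.
move=> y; apply: (@continuous_comp _ _ _ (fun y => fVAR Z phibar Phi i (f0inv y)) (fun M : 'cV[R]_p => M a 0)).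
  apply: continuous_comp; [exact: Hinvc | exact: Hfc].
exact: coord_continuous.
Qed.

Lemma hF_cont i : continuous (fun y => hF y i 0).
Proof.
case: (splitP i) => [j Ej|j Ej].
  have -> : i = lshift _ j by apply: val_inj.
  have -> : (fun y => hF y (lshift _ j) 0) = (fun y => \sum_a La j a *
     (- y a 0 + \sum_(i < k.+1 | (0 < i)%N) fVAR Z phibar Phi i (f0inv y) a 0)).
    apply: funext => y; rewrite /hF /bthetaVAR col_mxEu theta_pi /piF Hf0K mxE.
    apply: eq_bigr => a _; by rewrite !mxE summxE.
  apply: cont_sumR => a; apply: cont_cmul.
  apply: cont_add; first by apply: cont_opp; exact: coord_continuous.
  by apply: cont_sumR => i0; exact: fcomp_cont.
have -> : i = rshift _ j by apply: val_inj.
have -> : (fun y => hF y (rshift _ j) 0) = (fun y =>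
     - \sum_(i < k.+1 | ((j %/ p).+1 < i)%N) fVAR Z phibar Phi i (f0inv y) (blk_pos j) 0).
  apply: funext => y; rewrite /hF /bthetaVAR col_mxEd /bgVAR /stackv !mxE.
  by rewrite summxE.
apply: cont_opp; apply: cont_sumR => i0; exact: fcomp_cont.
Qed.

Lemma seg_cont (z0 d : 'cV[R]_p) : continuous (fun t : R => z0 + t *: d).
Proof.
move=> t; apply: (@continuousD _ _ _ (fun=> z0) (fun t : R => t *: d)).
  exact: cst_continuous.
apply: (@continuousZr_tmp _ _ _ (fun t : R => t) d t).
exact: cvg_id.
Qed.

Lemma part1_core (z z' : 'cV[R]_p) : exists w : 'I_L -> R,
  [/\ forall l, 0 <= w l, \sum_l w l = 1 &
      hF z - hF z' = \sum_l w l *: (Jmat l *m (z - z'))].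
Proof.
set d := z - z'.
pose phi t := hF (z' + t *: d).
pose T l := [set t : R | Z l (f0inv (z' + t *: d))].
have phic i : continuous (fun t => phi t i 0).
  move=> t; apply: (@continuous_comp _ _ _ (fun t : R => z' + t *: d) (fun y => hF y i 0)).
    exact: seg_cont.
  exact: hF_cont.
have onT l s t : T l s -> T l t -> phi t - phi s = (t - s) *: (Jmat l *m d).
  move=> Ts Tt; rewrite /phi (hF_aff Tt Ts) opprD addrACA subrr add0r -scalerBl.
  by rewrite -scalemxAr.
have Haff l s t : ad (T l) s -> ad (T l) t -> phi t - phi s = (t - s) *: (Jmat l *m d).
  exact: (ad_affine phic (onT l)).
have Hcov x : 0 <= x < 1 -> exists2 l, l \in [set: 'I_L]%SET & T l x.
  move=> _; have [l Hl] := Z_cover (f0inv (z' + x *: d)); by exists l; rewrite ?in_setT.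
have [w [w0 w1 w2]] := @seg1d _ _ _ T phi _ Haff _ [set: 'I_L]%SET erefl 0 1 ltr01 Hcov.
exists w; split => //; first by rewrite w1 subr0.
move: w2; rewrite /phi scale1r scale0r addr0 /d [z' + _]addrC subrK //.
Qed.

Lemma bbetaT_mul l (dz : 'cV[R]_p) (dzeta : 'cV[R]_(k.-1 * p)) :
  bbetaT Phi beta l *m col_mx dz dzeta = Jmat l *m dz + col_mx 0 (Dmx R k.-1 p *m dzeta).
Proof. by rewrite /bbetaT mul_block_col mul0mx addr0 /Jmat mul_col_mx add_col_mx addr0. Qed.

Lemma bD0_mul (z : 'cV[R]_p) (zeta : 'cV[R]_(k.-1 * p)) :
  bD0 R p k r *m col_mx z zeta = col_mx 0 (Dmx R k.-1 p *m zeta).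
Proof. by rewrite /bD0 mul_block_col !mul0mx !add0r. Qed.

Lemma part1 (z z' : 'cV[R]_p) (zeta zeta' : 'cV[R]_(k.-1 * p)) :
  exists2 bBT : 'M[R]_(r + k.-1 * p, p + k.-1 * p),
       conv_hull (bbetaT Phi beta) bBT &
       (bthetaVAR Z phibar Phi mubar beta (f0inv z)
          + bD0 R p k r *m col_mx z zeta)
       - (bthetaVAR Z phibar Phi mubar beta (f0inv z')
          + bD0 R p k r *m col_mx z' zeta')
       = bBT *m (col_mx z zeta - col_mx z' zeta').
Proof.
have [w [w0 w1 w2]] := part1_core z z'.
exists (\sum_l w l *: bbetaT Phi beta l); first by exists w.
rewrite opp_col_mx add_col_mx mulmx_suml.
under eq_bigr => l _ do rewrite -scalemxAl bbetaT_mul scalerDr.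
rewrite big_split /= -w2 -scaler_suml w1 scale1r.
rewrite !bD0_mul opprD addrACA -/(hF z) -/(hF z'); congr (_ + _).
by rewrite opp_col_mx add_col_mx oppr0 addr0 mulmxBr.
Qed.
End Geo.


Lemma aff_comb (R : realType) (L m n : nat) (w : 'I_L -> R) (B : 'I_L -> 'M[R]_(m, n))
  (al : 'M[R]_(n, m)) : \sum_l w l = 1 ->
  \sum_l w l *: (1%:M + B l *m al) = 1%:M + (\sum_l w l *: B l) *m al.
Proof.
move=> w1; under eq_bigr => l _ do rewrite scalerDr.
rewrite big_split /= -scaler_suml w1 scale1r mulmx_suml; congr (_ + _).
by apply: eq_bigr => l _; rewrite scalemxAl.
Qed.

Unset Implicit Arguments.

Theorem lemma6p1 (R : realType) (p k r L : nat)
    (Z : 'I_L -> set 'cV[R]_p)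
    (phibar : 'I_k.+1 -> 'I_L -> 'cV[R]_p)
    (Phi : 'I_k.+1 -> 'I_L -> 'M[R]_p)
    (c : 'cV[R]_p)
    (alpha : 'M[R]_(p, r))
    (mu : 'cV[R]_r) (mubar : 'I_L -> 'cV[R]_r) (beta : 'I_L -> 'M[R]_(p, r))
    (f0inv : 'cV[R]_p -> 'cV[R]_p) :
  (1 <= p)%N -> (1 <= k)%N -> (r <= p)%N ->
  (* piecewise affine VAR *)
  convex_partition Z ->
  (forall i, continuous (fVAR Z phibar Phi i)) ->
  (forall i, fVAR Z phibar Phi i 0 = 0) ->
  (* alpha of rank r and condition (1) *)
  \rank alpha = r ->
  c = alpha *m mu ->
  (forall l, pibarVAR phibar l = alpha *m mubar l) ->
  (forall l, PiVAR Phi l = alpha *m (beta l)^T) ->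
  (* condition (2): f_0 is a homeomorphism with inverse f0inv,
     and each Phi_0^(l) is invertible *)
  cancel (fVAR Z phibar Phi ord0) f0inv ->
  cancel f0inv (fVAR Z phibar Phi ord0) ->
  continuous f0inv ->
  (forall l, Phi ord0 l \in unitmx) ->
  (forall (z z' : 'cV[R]_p) (zeta zeta' : 'cV[R]_(k.-1 * p)),
     exists2 bBT : 'M[R]_(r + k.-1 * p, p + k.-1 * p),
       conv_hull (bbetaT Phi beta) bBT &
       (bthetaVAR Z phibar Phi mubar beta (f0inv z)
          + bD0 R p k r *m col_mx z zeta)
       - (bthetaVAR Z phibar Phi mubar beta (f0inv z')
          + bD0 R p k r *m col_mx z' zeta')
       = bBT *m (col_mx z zeta - col_mx z' zeta'))
  /\
  jsr [set 1%:M + bBT *m balpha k alpha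
      | bBT in conv_hull (bbetaT Phi beta)]
  = jsr [set 1%:M + bbetaT Phi beta l *m balpha k alpha | l in [set: 'I_L]].
Proof.
move=> p1 k1 rp Zpart Hfc Hf0 Hrank Hc Hpibar HPi Hf0inv Hf0K Hinvc HPhi0.
split.
  move=> z z' zeta zeta'.
  exact: (part1 Zpart Hrank Hpibar HPi Hf0K HPhi0 Hfc Hinvc).
have L0 : (0 < L)%N.
  have [l _] := Z_cover Zpart 0; exact: leq_ltn_trans (leq0n l) (ltn_ord l).
set F := fun l => 1%:M + bbetaT Phi beta l *m balpha k alpha.
have -> : [set 1%:M + bBT *m balpha k alpha | bBT in conv_hull (bbetaT Phi beta)] =
          conv_hull F.
  apply/seteqP; split => x.
    move=> [B [w [w0 [w1 ->]]] <-]; exists w; split => //; split => //.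
    by rewrite /F aff_comb.
  move=> [w [w0 [w1 ->]]]; exists (\sum_l w l *: bbetaT Phi beta l); first by exists w.
  by rewrite /F aff_comb.
exact: jsr_hull.
Qed.
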